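(* Let $p,q$ be positive integers with $p/q\ge 2$, let $G$ be a connected graph with a fixed orientation $\overrightarrow{G}$, and let $\varphi,\psi$ be two $(p,q)$-labellings of $G$. Then $\varphi$ can be transformed into $\psi$ through a finite sequence of edge cut relabellings if and only if $\varphi(C)=\psi(C)$ for every cycle $C$ of $G$.
   Context: Fix an orientation $\overrightarrow{G}$ of $G$. For an edge-labelling $\varphi:E(G)\to\{0,1,\dots,p-1\}$ and a cycle $C$ with a chosen direction of traversal, let $C^+$ be the edges of $C$ whose orientation agrees with the traversal and $C^-$ the others, and define $\varphi(C)=\sum_{e\in C^+}\varphi(e)+\sum_{e\in C^-}(p-\varphi(e))$, the sum taken in $\mathbb{Z}$. A $(p,q)$-labelling is an edge-labelling $\varphi:E(G)\to\{0,\dots,p-1\}$ such that (P1) $q\le\varphi(e)\le p-q$ for every edge $e$, and (P2) $\varphi(C)\equiv 0\pmod p$ for every cycle $C$. For $\emptyset\ne X\subsetneq V(G)$, let $\partial^+(X)$ (resp. $\partial^-(X)$) be the set of arcs of $\overrightarrow{G}$ from $X$ to $V(G)\setminus X$ (resp. from $V(G)\setminus X$ to $X$). Given a $(p,q)$-labelling $\varphi$ and an integer $1\le\alpha\le p-1$ such that $\varphi(e)\ge q+\alpha$ for all $e\in\partial^+(X)$ and $\varphi(e)\le p-q-\alpha$ for all $e\in\partial^-(X)$, the edge cut relabelling of $\varphi$ on $\partial(X)$ by $\alpha$ is the labelling $\varphi'$ with $\varphi'(e)=\varphi(e)-\alpha$ for $e\in\partial^+(X)$, $\varphi'(e)=\varphi(e)+\alpha$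 for $e\in\partial^-(X)$, and $\varphi'(e)=\varphi(e)$ otherwise. *)

(* Defs.v *)
From mathcomp Require Import all_boot.
Set Implicit Arguments. Unset Strict Implicit. Unset Printing Implicit Defensive.

(* An edge-labelling assigns a value phi x y to
   every arc (x,y) with o x y; values on non-arcs are irrelevant. *)

Section Defs.
Variable V : finType.

Definition simple_graph (g : rel V) : Prop :=
  (forall x, ~~ g x x) /\ (forall x y, g x y = g y x).

Definition orientation (g o : rel V) : Prop :=
  (forall x y, o x y -> g x y) /\ (forall x y, g x y -> o x y (+) o y x).

Definition connected_graph (g : rel V) : Prop := forall x y, connect g x y.

(* A cycle of g with a chosen direction of traversal: a duplicate-free
   sequence of at least 3 vertices, consecutive ones (cyclically) adjacent. *)
Definition is_cycle (g : rel V) (c : seq V) : Prop :=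
  [/\ (3 <= size c)%N, uniq c & cycle g c].

Definition contrib (p : nat) (o : rel V) (phi : V -> V -> nat) (uv : V * V) : nat :=
  if o uv.1 uv.2 then phi uv.1 uv.2 else p - phi uv.2 uv.1.

(* phi(C) = sum over C^+ of phi(e) + sum over C^- of (p - phi(e)) *)
Definition cycle_value (p : nat) (o : rel V) (phi : V -> V -> nat) (c : seq V) : nat :=
  \sum_(uv <- zip c (rot 1 c)) contrib p o phi uv.

Definition pq_labelling (p q : nat) (g o : rel V) (phi : V -> V -> nat) : Prop :=
  (forall x y, o x y -> phi x y < p) /\
  (forall x y, o x y -> q <= phi x y <= p - q) /\
  (forall c, is_cycle g c -> cycle_value p o phi c %% p = 0).

Definition cut_relabelling (p q : nat) (o : rel V) (phi : V -> V -> nat)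
  (X : {set V}) (alpha : nat) (phi' : V -> V -> nat) : Prop :=
  [/\ (X != set0) && (X != setT), 1 <= alpha <= p - 1,
      (forall x y, o x y -> x \in X -> y \notin X -> q + alpha <= phi x y),
      (forall x y, o x y -> x \notin X -> y \in X -> phi x y <= p - q - alpha) &
      (forall x y, o x y ->
         phi' x y = if (x \in X) && (y \notin X) then phi x y - alpha
                    else if (x \notin X) && (y \in X) then phi x y + alpha
                    else phi x y)].

Definition relabel_step (p q : nat) (g o : rel V) (phi phi' : V -> V -> nat) : Prop :=
  pq_labelling p q g o phi /\
  exists (X : {set V}) (alpha : nat), cut_relabelling p q o phi X alpha phi'.

Inductive relabel_reach (p q : nat) (g o : rel V) :
  (V -> V -> nat) -> (V -> V -> nat) -> Prop :=
| rr_refl phi psi : (forall x y, o x y -> phi x y = psi x y) ->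
    relabel_reach p q g o phi psi
| rr_step phi phi' psi : relabel_step p q g o phi phi' ->
    relabel_reach p q g o phi' psi -> relabel_reach p q g o phi psi.

End Defs.

(* Main.v *)
Require Import Defs.
From mathcomp Require Import all_boot.
From mathcomp Require Import all_algebra zify.
Set Implicit Arguments. Unset Strict Implicit. Unset Printing Implicit Defensive.
Import GRing.Theory Num.Theory.

Section S.
Variable V : finType.
Variables (g o : rel V) (p : nat).
Hypothesis gxor : forall x y, g x y -> o x y (+) o y x.

Lemma zip_rcons_l (T U : Type) (s : seq T) (t : seq U) y :
  size t <= size s -> zip (rcons s y) t = zip s t.
Proof.
elim: s t => [|a s IH] [|b t] //= H.
by rewrite IH.
Qed.

Lemma path_zip x s : path g x s -> forall uv, uv \in zip (x :: s) s -> g uv.1 uv.2.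
Proof.
elim: s x => [|y s IH] x //= /andP [Hxy Hp] uv.
rewrite in_cons => /orP [/eqP -> //|]; exact: IH.
Qed.

Lemma cycle_zip c : cycle g c -> forall uv, uv \in zip c (rot 1 c) -> g uv.1 uv.2.
Proof.
case: c => [|x s] //= Hp uv.
rewrite rot1_cons -(@zip_rcons_l _ _ (x :: s) (rcons s x) x); last by rewrite /= size_rcons.
exact: path_zip.
Qed.

Lemma tele (a b : V -> V -> nat) (h : V -> nat) c :
  (forall x y, o x y -> a x y <= p) -> (forall x y, o x y -> b x y <= p) ->
  (forall x y, o x y -> a x y + h x = b x y + h y) ->
  cycle g c -> cycle_value p o a c = cycle_value p o b c.
Proof.
move=> Ha Hb Hab Hc.
have E: \sum_(uv <- zip c (rot 1 c)) (contrib p o a uv + h uv.1) =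
        \sum_(uv <- zip c (rot 1 c)) (contrib p o b uv + h uv.2).
  apply: eq_big_seq => -[u v] /(cycle_zip Hc) /= Guv.
  rewrite /contrib /=. have := gxor Guv.
  case Eo: (o u v) => /= H; first exact: Hab.
  have := Hab v u H; have := Ha v u H; have := Hb v u H; lia.
rewrite !big_split /= in E.
have E1 : \sum_(uv <- zip c (rot 1 c)) h uv.1 = \sum_(x <- c) h x.
  by rewrite -[in RHS](@unzip1_zip _ _ c (rot 1 c)) ?size_rot // big_map.
have E2 : \sum_(uv <- zip c (rot 1 c)) h uv.2 = \sum_(x <- c) h x.
  have Pr : perm_eq (rot 1 c) c by rewrite perm_rot perm_refl.
  rewrite -(perm_big _ Pr).
  by rewrite -[in RHS](@unzip2_zip _ _ c (rot 1 c)) ?size_rot // big_map.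
rewrite E1 E2 in E.
by apply/eqP; rewrite -(eqn_add2r (\sum_(x <- c) h x)) E.
Qed.

Lemma forward q phi psi : relabel_reach p q g o phi psi ->
  (forall x y, o x y -> psi x y < p) ->
  forall c, cycle g c -> cycle_value p o phi c = cycle_value p o psi c.
Proof.
elim=> {phi psi} [phi psi Heq|phi phi' psi [[Hp _] [X [al [_ Hal Hout Hin Hf]]]] _ IH] Hpsi c Hc.
  apply: (@tele _ _ (fun _ => 0)) => // x y oxy.
  - by rewrite Heq // ltnW // Hpsi.
  - by rewrite ltnW // Hpsi.
  - by rewrite !addn0 Heq.
rewrite -IH //.
apply/esym/(@tele _ _ (fun v => al * (v \in X))) => // x y oxy.
- rewrite Hf //; have := Hp x y oxy; have := Hin x y oxy.
  case: (x \in X); case: (y \in X) => /=; lia.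
- by rewrite ltnW // Hp.
- rewrite Hf //; have := Hp x y oxy; have := Hin x y oxy; have := Hout x y oxy.
  case: (x \in X); case: (y \in X) => /=; lia.
Qed.

Lemma main_ind q (psi : V -> V -> nat) n : 0 < q -> 2 * q <= p ->
  pq_labelling p q g o psi ->
  forall (phi : V -> V -> nat) (h : V -> nat),
  pq_labelling p q g o phi ->
  (forall u v, o u v -> psi u v + h u = phi u v + h v) ->
  \sum_v h v < n -> relabel_reach p q g o phi psi.
Proof.
move=> q0 pq2 Lpsi; have [Pp [Bp Cp]] := Lpsi.
elim: n => [|n IH] phi h Lphi Hh Hs //.
have [Pf [Bf Cf]] := Lphi.
pose M := \max_v h v.
have hM : forall v, h v <= M by move=> v; apply: leq_bigmax.
case: (boolP [forall v, h v == M]) => [/forallP A|/forallPn [w Hw]].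
  apply: rr_refl => x y oxy; have := Hh x y oxy.
  by rewrite (eqP (A x)) (eqP (A y)); lia.
have [v0 Hv0] : exists v0, h v0 = M.
  by exists [arg max_(i > w) h i]; rewrite /M (bigmax_eq_arg w).
have Mpos : 0 < M by have := hM w; move: Hw; rewrite eq_sym; lia.
pose X := [set v | h v == M].
pose h' v := if v \in X then (h v).-1 else h v.
pose phi' x y := psi x y + h' x - h' y.
have key : forall x y, o x y -> [/\ psi x y + h' x = phi' x y + h' y,
   phi' x y = if (x \in X) && (y \notin X) then phi x y - 1
      else if (x \notin X) && (y \in X) then phi x y + 1 else phi x y,
   ((x \in X) -> (y \notin X) -> q + 1 <= phi x y),
   ((x \notin X) -> (y \in X) -> phi x y <= p - q - 1) &
   q <= phi' x y <= p - q].
  move=> x y oxy; have := Hh x y oxy; have := hM x; have := hM y.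
  have := Bp x y oxy; have := Bf x y oxy.
  rewrite /phi' /h' !inE; case: (h x =P M); case: (h y =P M) => /= ? ?; move=> *; split=> //= *; lia.
apply: (@rr_step _ _ _ _ _ _ phi'); first split => //.
  exists X, 1; split.
  - apply/andP; split.
      by apply/set0Pn; exists v0; rewrite inE Hv0.
    apply/negP => /eqP XT; have : w \in X by rewrite XT inE.
    by rewrite inE (negbTE Hw).
  - lia.
  - by move=> x y oxy; case: (key x y oxy).
  - by move=> x y oxy; case: (key x y oxy).
  - by move=> x y oxy; case: (key x y oxy).
apply: (IH _ h').
- split; last split.
  + move=> x y oxy; case: (key x y oxy) => _ _ _ _; lia.
  + by move=> x y oxy; case: (key x y oxy).
  + move=> c Hcy; have [_ _ Hc] := Hcy; rewrite -(@tele psi phi' h') //.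
    * exact: Cp.
    * by move=> x y oxy; rewrite ltnW // Pp.
    * move=> x y oxy; case: (key x y oxy) => _ _ _ _; lia.
    * by move=> x y oxy; case: (key x y oxy).
- by move=> x y oxy; case: (key x y oxy).
- have Xv0 : v0 \in X by rewrite inE Hv0.
  rewrite (bigD1 v0) //= in Hs; rewrite (bigD1 v0) //=.
  have : \sum_(i | i != v0) h' i <= \sum_(i | i != v0) h i.
    by apply: leq_sum => i _; rewrite /h'; case: ifP => _; lia.
  rewrite /h' Xv0; lia.
Qed.
End S.

Lemma nonuniq_split (T:eqType) (t : seq T) :
  ~~ uniq t -> exists a y b c, t = a ++ y :: b ++ y :: c.
Proof.
elim: t => [|z t IH] //=; rewrite negb_and negbK => /orP [zt|/IH [a [y [b [c ->]]]]].
  by case/splitPr: zt => b c; exists [::], z, b, c.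
by exists (z :: a), y, b, c.
Qed.

Section W.
Variable V : finType.
Variables (g o : rel V) (p : nat) (phi psi : V -> V -> nat).
Hypothesis gxor : forall x y, g x y -> o x y (+) o y x.
Hypothesis girr : forall x, ~~ g x x.
Local Open Scope ring_scope.
Definition dd (uv : V * V) : int :=
  if o uv.1 uv.2 then (psi uv.1 uv.2)%:Z - (phi uv.1 uv.2)%:Z
  else (phi uv.2 uv.1)%:Z - (psi uv.2 uv.1)%:Z.
Definition W x s := \sum_(uv <- zip (x::s) s) dd uv.
Lemma W_nil x : W x [::] = 0. Proof. by rewrite /W big_nil. Qed.
Lemma W_cons x y s : W x (y::s) = dd (x,y) + W y s.
Proof. by rewrite /W /= big_cons. Qed.
Lemma W_cat x s1 s2 : W x (s1 ++ s2) = W x s1 + W (last x s1) s2.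
Proof.
elim: s1 x => [|y s1 IH] x /=; first by rewrite W_nil add0r.
by rewrite !W_cons IH addrA.
Qed.
Lemma dd_anti x y : g x y -> dd (x,y) + dd (y,x) = 0.
Proof. move=> /gxor; rewrite /dd /=; case: (o x y); case: (o y x) => //= _; lia. Qed.

Lemma closed_walk
  (Hc : forall x s, uniq (x :: s) -> (2 <= size s)%N -> path g x (rcons s x) -> W x (rcons s x) = 0) n :
  forall x s, (size s < n)%N -> path g x s -> last x s = x -> W x s = 0.
Proof.
elim: n => [|n IH] x s //= Hs Hp Hl.
have split3 : forall s1 s2 s3 y, s = s1 ++ s2 ++ s3 -> last x s1 = y -> last y s2 = y ->
    s2 != [::] -> s1 ++ s3 != [::] -> W x s = 0.
  move=> s1 s2 s3 y E Hl1 Hl2 N2 N13.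
  have S2 : (0 < size s2)%N by rewrite lt0n size_eq0.
  have S13 : (0 < size s1 + size s3)%N by rewrite -size_cat lt0n size_eq0.
  move: Hp Hl Hs; rewrite E !cat_path !last_cat Hl1 Hl2 !size_cat => /and3P [P1 P2 P3] Hl3 Hsz.
  rewrite !W_cat Hl1 Hl2 (IH y s2) ?Hl2 //; last lia.
  have := IH x (s1 ++ s3); rewrite W_cat Hl1 cat_path Hl1 P1 P3 last_cat Hl1 Hl3 size_cat.
  by rewrite add0r => ->//; lia.
move: Hs Hp Hl split3; case/lastP: s => [|s' z] Hs Hp; first by rewrite W_nil.
rewrite last_rcons => Ez; subst z => split3.
case Hu: (uniq (x :: s')).
  case Hsz: (2 <= size s')%N; first exact: Hc.
  clear split3; move: Hsz Hp Hs; case: s' Hu => [|y [|z s']] //= _ _ Hp _.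
    by move: Hp => /= /andP [Hxx _]; move: (girr x); rewrite Hxx.
  by move: Hp => /= /andP [gxy _]; rewrite W_cons W_cons W_nil addr0 dd_anti.
move: Hu => /= /negbT; rewrite negb_and negbK => /orP [xs|].
  case/splitPr: xs split3 => a b split3.
  apply: (split3 [::] (rcons a x) (rcons b x) x) => //.
  - by rewrite rcons_cat /= cat_rcons.
  - by rewrite last_rcons.
  - by rewrite -size_eq0 size_rcons.
  - by rewrite /= -size_eq0 size_rcons.
case/nonuniq_split => [a [y [b [c E]]]].
apply: (split3 (rcons a y) (rcons b y) (rcons c x) y) => //.
- by rewrite E -!cats1 -!catA /= -catA.
- by rewrite last_rcons.
- by rewrite last_rcons.
- by rewrite -size_eq0 size_rcons.
- by rewrite -size_eq0 size_cat size_rcons.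
Qed.

Lemma cv_diff (Hphi : forall x y, o x y -> (phi x y <= p)%N)
  (Hpsi : forall x y, o x y -> (psi x y <= p)%N) c : cycle g c ->
  (cycle_value p o psi c)%:Z - (cycle_value p o phi c)%:Z = \sum_(uv <- zip c (rot 1 c)) dd uv.
Proof.
move=> Hc; rewrite /cycle_value !(big_morph Posz PoszD (erefl (Posz 0))) -sumrB.
apply: eq_big_seq => -[u v] /(cycle_zip Hc) /= Guv.
rewrite /contrib /dd /=; have := gxor Guv.
case Eo: (o u v) => /= H //.
have := Hphi v u H; have := Hpsi v u H; lia.
Qed.
End W.

Theorem theorem2p2 (V : finType) (g o : rel V) (p q : nat)
  (phi psi : V -> V -> nat) :
  (0 < p)%N -> (0 < q)%N -> (2 * q <= p)%N ->
  simple_graph g -> connected_graph g -> orientation g o ->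
  pq_labelling p q g o phi -> pq_labelling p q g o psi ->
  (relabel_reach p q g o phi psi <->
   (forall c : seq V, is_cycle g c -> cycle_value p o phi c = cycle_value p o psi c)).
Proof.
move=> p0 q0 pq2 [girr gsym] Hconn [og gxor] Lphi Lpsi.
have [Pf [Bf Cf]] := Lphi; have [Pp [Bp Cp]] := Lpsi.
split.
  by move=> R c [_ _ Hc]; apply: (forward gxor R Pp Hc).
move=> Hcyc.
case: (pickP (fun _ : V => true)) => [r _|none]; last first.
  by apply: rr_refl => x; have := none x.
have exQ : forall v, exists s, path g v s && (last v s == r).
  move=> v; have /connectP [s Hs Hl] := Hconn v r.
  by exists s; rewrite Hs -Hl eqxx.
pose Q v := xchoose (exQ v).
have HQ : forall v, path g v (Q v) && (last v (Q v) == r) := fun v => xchooseP (exQ v).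
have Hphi : forall x y, o x y -> (phi x y <= p)%N by move=> x y oxy; rewrite ltnW // Pf.
have Hpsi : forall x y, o x y -> (psi x y <= p)%N by move=> x y oxy; rewrite ltnW // Pp.
have Hc : forall x s, uniq (x :: s) -> (1 < size s)%N -> path g x (rcons s x) ->
    W o phi psi x (rcons s x) = 0%R.
  move=> x s Hu Hs Hp.
  have Hcy : is_cycle g (x :: s) by split.
  have := cv_diff gxor Hphi Hpsi (c := x :: s) Hp.
  rewrite (Hcyc _ Hcy) GRing.subrr rot1_cons => E.
  have EZ : zip (x :: rcons s x) (rcons s x) = zip (x :: s) (rcons s x).
    by apply: (@zip_rcons_l _ _ (x :: s) (rcons s x) x); rewrite /= size_rcons.
  by rewrite /W EZ -E.
have CW := closed_walk gxor girr Hc.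
pose f v := (- W o phi psi v (Q v))%R.
have Hf : forall u v, o u v -> ((psi u v)%:Z - (phi u v)%:Z = f v - f u)%R.
  move=> u v ouv; have /connectP [P HP HPl] := Hconn r u.
  have /andP [Qu1 /eqP Qu2] := HQ u; have /andP [Qv1 /eqP Qv2] := HQ v.
  have E1 := CW (size (P ++ Q u)).+1 r (P ++ Q u) (ltnSn _).
  rewrite cat_path -HPl HP Qu1 last_cat -HPl Qu2 in E1.
  have E2 := CW (size (P ++ v :: Q v)).+1 r (P ++ v :: Q v) (ltnSn _).
  rewrite cat_path -HPl HP /= (og _ _ ouv) Qv1 last_cat -HPl /= Qv2 in E2.
  have {}E1 := E1 isT erefl; have {}E2 := E2 isT erefl.
  rewrite !W_cat -HPl W_cons /dd /= ouv in E1 E2.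
  rewrite /f; lia.
pose K := (\sum_w `|f w|)%N.
have HK : forall w, (`|f w| <= K)%N.
  by move=> w; rewrite /K (bigD1 w) //= leq_addr.
pose h v := `|(f v + K%:Z)%R|%N.
apply: (@main_ind V g o p gxor q psi (\sum_v h v).+1 q0 pq2 Lpsi phi h Lphi _ (ltnSn _)).
move=> u v ouv; have := Hf u v ouv; have := HK u; have := HK v.
rewrite /h; lia.
Qed.
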